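(* Let $K$ be a commutative ring of characteristic $0$ with unit and $M$ a multiplicative $\mathbb{R}$-vector subspace of $\mathcal{H}^{>0}$. Let $F_\nu\in K((M))$ be nonzero for $\nu\in\mathbb{N}$, assume that each $F_\nu$ has $M$-natural support and that the sequence $(\operatorname{lm}(F_\nu):\nu\in\mathbb{N})$ is decreasing and coinitial in $M$. Then $\sum_\nu F_\nu$ has $M$-natural support.
   Context: $\mathcal{H}$ is the Hardy field of germs at $+\infty$ of unary functions definable in $\mathbb{R}_{\mathrm{an},\exp}$, totally ordered by eventual comparison. $K((M))$ is the ring of formal series $\sum_{m\in M}a_mm$, $a_m\in K$, with anti-well-ordered support; $\operatorname{lm}(F)$ is the largest element of the support of nonzero $F$. A set $S\subseteq M$ is $M$-natural if $S\cap(a,+\infty)$ is finite for all $a\in M$; a series has $M$-natural support if its support is $M$-natural. Coinitial in $M$ means: for every $m\in M$ some term of the sequence is $\le m$. Under the hypotheses, the infinite sum $\sum_\nu F_\nu$ is defined coefficientwise and is an element of $K((M))$. *)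

(* Defs.v *)
From HB Require Import structures.
From mathcomp Require Import all_boot all_order all_algebra.
From mathcomp Require Import boolp classical_sets cardinality fsbigop.
Set Implicit Arguments. Unset Strict Implicit. Unset Printing Implicit Defensive.
Import Order.TTheory GRing.Theory.
Local Open Scope classical_set_scope.
Local Open Scope ring_scope.

(* A formal series sum_{m in M} a_m m in K((M)) is represented by its
   coefficient function F : M -> K. *)
Definition hsupport (K : nmodType) (M : Type) (F : M -> K) : set M :=
  [set m | F m != 0].

Definition anti_well_ordered d (M : orderType d) (S : set M) : Prop :=
  forall A : set M, A `<=` S -> A !=set0 ->
    exists m, A m /\ (forall x, A x -> (x <= m)%O).

Definition is_hahn_series (K : nmodType) d (M : orderType d) (F : M -> K) : Prop :=
  anti_well_ordered (hsupport F).

Definition is_lm (K : nmodType) d (M : orderType d) (F : M -> K) (m : M) : Prop :=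
  hsupport F m /\ (forall x, hsupport F x -> (x <= m)%O).

Definition M_natural d (M : orderType d) (S : set M) : Prop :=
  forall a : M, finite_set (S `&` [set m | (a < m)%O]).

Definition series_sum (K : nmodType) (M : Type) (F : nat -> M -> K) : M -> K :=
  fun m => \sum_(nu \in [set nu | F nu m != 0]) F nu m.

(* Main.v *)
Require Import Defs.
From HB Require Import structures.
From mathcomp Require Import all_boot all_order all_algebra.
From mathcomp Require Import boolp classical_sets cardinality fsbigop.
Import Order.TTheory GRing.Theory.
Local Open Scope classical_set_scope.
Local Open Scope ring_scope.

Theorem lemma5p6 (K : comNzRingType)
  (charK0 : forall n : nat, (n.+1)%:R != 0 :> K)
  (d : Order.disp_t) (M : orderType d)
  (F : nat -> M -> K)
  (F_hahn : forall nu, is_hahn_series (F nu))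
  (F_nz : forall nu, exists m, F nu m != 0)
  (F_nat : forall nu, M_natural (hsupport (F nu)))
  (l : nat -> M) (l_lm : forall nu, is_lm (F nu) (l nu))
  (l_decr : forall i j : nat, (i <= j)%N -> (l j <= l i)%O)
  (l_coinit : forall m : M, exists nu, (l nu <= m)%O) :
  M_natural (hsupport (series_sum F)).
Proof.
move=> a; have [nu0 Hnu0] := l_coinit a.
apply: (@sub_finite_set _ _
  (\bigcup_(nu in `I_nu0) (hsupport (F nu) `&` [set m | (a < m)%O]))).
  move=> m [Hm Ham].
  have [nu Hnu] : exists nu, F nu m != 0.
    apply/not_existsP => Hall; move: Hm; rewrite /hsupport /series_sum /=.
    have -> : [set nu | F nu m != 0] = set0.
      by apply/seteqP; split => x //= Hx; apply: (Hall x).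
    by rewrite fsbig_set0 eqxx.
  exists nu; last by split.
  rewrite /= ltnNge; apply/negP => Hle.
  have Hml : (m <= l nu)%O by apply: (l_lm nu).2.
  have := le_trans Hml (le_trans (l_decr _ _ Hle) Hnu0).
  by rewrite leNgt Ham.
apply: bigcup_finite; first exact: finite_II.
by move=> i _; apply: F_nat.
Qed.
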